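(* Let $G$ be a claw-free graph and let $C$, $C_0$ be even holes of $G$. If $C$ is compatible with $C_0$, then $C$ is compatible with every even hole $C'\in\langle C_0\rangle$.
   Context: A hole is an induced cycle of length $\ge4$; even hole: even length. Claw-free: no induced $K_{1,3}$. Two even holes $C,C'$ are compatible iff $G[C\cup C']$ is a disconnected graph whose components are $G[C]$ and $G[C']$ (i.e., they are disjoint and no edge joins them). Single-vertex deformation: if $C$ is an even hole and $\mathbf{j}\notin C$ has $\Gamma_C(\mathbf{j})=\{\mathbf{u},\mathbf{k},\mathbf{v}\}$ with $\mathbf{u},\mathbf{v}$ the two neighbours of $\mathbf{k}$ in $C$, then $(C\setminus\{\mathbf{k}\})\cup\{\mathbf{j}\}$ is a single-vertex deformation of $C$. The deformation closure $\langle C_0\rangle$ is the smallest set of holes containing $C_0$ closed under single-vertex deformations. *)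

(* Defs.v *)
From mathcomp Require Import all_boot.
Set Implicit Arguments. Unset Strict Implicit. Unset Printing Implicit Defensive.

Section Graphs.
Variables (T : finType) (e : rel T).

Definition simple_graph : Prop := symmetric e /\ irreflexive e.

Definition claw_free : Prop :=
  forall v a b c : T,
    e v a -> e v b -> e v c ->
    a != b -> a != c -> b != c ->
    ~~ e a b -> ~~ e a c -> ~~ e b c -> False.

Definition nbhd_in (C : {set T}) (x : T) : {set T} := [set y in C | e x y].

Definition induced_rel (C : {set T}) : rel T :=
  [rel x y | [&& x \in C, y \in C & e x y]].

Definition induced_cycle (C : {set T}) : Prop :=
  (forall x, x \in C -> #|nbhd_in C x| = 2) /\
  (forall x y, x \in C -> y \in C -> connect (induced_rel C) x y).

Definition hole (C : {set T}) : Prop := induced_cycle C /\ 4 <= #|C|.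
Definition even_hole (C : {set T}) : Prop := hole C /\ ~~ odd #|C|.

Definition compatible (C C' : {set T}) : Prop :=
  [disjoint C & C'] /\ (forall x y, x \in C -> y \in C' -> ~~ e x y).

Definition single_vertex_deformation (C C' : {set T}) : Prop :=
  even_hole C /\
  exists j u k v : T,
    [/\ j \notin C, k \in C, u != v,
        nbhd_in C k = [set u; v] &
        nbhd_in C j = [set u; k; v]] /\
    C' = j |: (C :\ k).

Inductive deformation_closure (C0 : {set T}) : {set T} -> Prop :=
  | dc_base : deformation_closure C0 C0
  | dc_step : forall C C', deformation_closure C0 C ->
      single_vertex_deformation C C' -> deformation_closure C0 C'.

End Graphs.

(* Main.v *)
Require Import Defs.
From mathcomp Require Import all_boot.
Set Implicit Arguments. Unset Strict Implicit. Unset Printing Implicit Defensive.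

Lemma nbhd_sub (T : finType) (e : rel T) (C : {set T}) x a b :
  induced_cycle e C -> x \in C -> a \in nbhd_in e C x -> b \in nbhd_in e C x ->
  a != b -> nbhd_in e C x \subset [set a; b].
Proof.
move=> [H2 _] xC ai bi ab.
have /eqP <- : [set a; b] == nbhd_in e C x.
  rewrite eqEcard cards2 ab H2 // andbT.
  by apply/subsetP => y /set2P[]->.
by [].
Qed.

Lemma no_triangle (T : finType) (e : rel T) (C : {set T}) k u v :
  simple_graph e -> hole e C -> k \in C -> u != v ->
  nbhd_in e C k = [set u; v] -> ~~ e u v.
Proof.
move=> [sym irr] [HC H4] kC uv nk; apply/negP => euv.
have ui : u \in nbhd_in e C k by rewrite nk !inE eqxx.
have vi : v \in nbhd_in e C k by rewrite nk !inE eqxx orbT.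
move: (ui) (vi); rewrite !inE => /andP[uC eku] /andP[vC ekv].
have ku : k != u by apply/eqP => kE; move: eku; rewrite kE irr.
have kv : k != v by apply/eqP => kE; move: ekv; rewrite kE irr.
have nu : nbhd_in e C u \subset [set k; v].
  apply: nbhd_sub => //; rewrite !inE ?kC ?vC ?euv //= sym //.
have nv : nbhd_in e C v \subset [set k; u].
  apply: nbhd_sub => //; rewrite !inE ?kC ?uC //= sym //.
have nk' : nbhd_in e C k \subset [set u; v] by rewrite nk.
set S := [set u; k; v].
have cl : closed (induced_rel e C) (mem S).
  have step : forall x y, x \in C -> y \in C -> e x y -> x \in S -> y \in S.
    move=> x y xC yC exy; rewrite /S !inE => /orP[/orP[/eqP xE|/eqP xE]|/eqP xE]; subst x.
    - have : y \in nbhd_in e C u by rewrite !inE yC.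
      by move=> /(subsetP nu)/set2P[]->; rewrite ?inE eqxx ?orbT.
    - have : y \in nbhd_in e C k by rewrite !inE yC.
      by move=> /(subsetP nk')/set2P[]->; rewrite ?inE eqxx ?orbT.
    - have : y \in nbhd_in e C v by rewrite !inE yC.
      by move=> /(subsetP nv)/set2P[]->; rewrite ?inE eqxx ?orbT.
  move=> x y /= /and3P[xC yC exy].
  apply/idP/idP; first exact: step.
  by apply: step => //; rewrite sym.
have CS : C \subset S.
  apply/subsetP => y yC.
  have := closed_connect cl (HC.2 u y uC yC).
  by rewrite !inE eqxx /= => <-.
have := subset_leq_card CS.
rewrite /S -setUA cardsU1 cards2 => H.
have : 4 <= (u \notin [set k; v]) + (k != v).+1 by apply: leq_trans H.
by case: (u \notin _); case: (k != v).
Qed.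

Theorem corollary5 (T : finType) (e : rel T) :
  simple_graph e -> claw_free e ->
  forall C C0 : {set T},
    even_hole e C -> even_hole e C0 -> compatible e C C0 ->
    forall C' : {set T}, deformation_closure e C0 C' -> even_hole e C' ->
      compatible e C C'.
Proof.
move=> sg cf C C0 _ _ comp0 C' dc _.
elim: dc => [|C1 C2 _ [dis1 ne1] [[EH _] [j [u [k [v [[jn kin uv nk nj] ->]]]]]]] //.
have [sym irr] := sg.
have ui : u \in nbhd_in e C1 k by rewrite nk !inE eqxx.
have vi : v \in nbhd_in e C1 k by rewrite nk !inE eqxx orbT.
move: (ui) (vi); rewrite !inE => /andP[uC1 eku] /andP[vC1 ekv].
have : j \in nbhd_in e C1 k = false.
  by rewrite inE (negbTE jn).
have ju : e j u by move: (nj) => /setP/(_ u); rewrite !inE eqxx uC1 /= => ->.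
have jk : e j k by move: (nj) => /setP/(_ k); rewrite !inE eqxx kin /= orbT => ->.
have jv : e j v by move: (nj) => /setP/(_ v); rewrite !inE eqxx vC1 /= !orbT => ->.
move=> _.
have jC : j \notin C.
  by apply/negP => jC; move: (ne1 _ _ jC kin); rewrite jk.
have notin : forall x y, x \in C -> y \in C1 -> x != y.
  move=> x y xC yC1; apply/eqP => exy; subst y.
  by move: dis1; rewrite -setI_eq0 => /eqP/setP/(_ x); rewrite !inE xC yC1.
have nuv := no_triangle sg EH kin uv nk.
have xj : forall x, x \in C -> ~~ e x j.
  move=> x xC; apply/negP => exj.
  apply: (cf j x u v (etrans (sym j x) exj) ju jv (notin _ _ xC uC1)
            (notin _ _ xC vC1) uv (ne1 _ _ xC uC1) (ne1 _ _ xC vC1) nuv).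
split.
- rewrite -setI_eq0; apply/eqP/setP => y; rewrite !inE.
  case: (boolP (y \in C)) => //= yC.
  apply/negP => /orP[/eqP yj|/andP[_ yC1]].
  + by subst y; rewrite yC in jC.
  + by move: (notin _ _ yC yC1); rewrite eqxx.
- move=> x y xC; rewrite !inE => /orP[/eqP->|/andP[_ yC1]].
  + exact: xj.
  + exact: ne1.
Qed.
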